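(* Let $m,n$ be positive integers with $m\geq n$. Then \begin{multline*} \sum_{k=0}^{n} \binom{m+k}{k} \binom{m}{k} \binom{n+k}{k} \binom{n}{k} \Bigl[ 1+k \bigl(H_{m+k}^{(1)} +H_{m-k}^{(1)} + H_{n+k}^{(1)} + H_{n-k}^{(1)} -4H_k^{(1)}\bigr) \Bigr]\\ +\sum_{k=n+1}^{m} (-1)^{k-n} \binom{m+k}{k} \binom{m}{k} \binom{n+k}{k} \Big/ \binom{k-1}{n} =(-1)^{m+n}. \end{multline*}
   Context: For non-negative integers $i$ and $n$, the generalized harmonic sum is $H^{(i)}_{n}:=\sum_{j=1}^{n} j^{-i}$ for $n\ge 1$, and $H^{(i)}_{0}:=0$. An empty sum (e.g. the second sum when $m=n$) equals $0$. *)

(* Defs.v *)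
From mathcomp Require Import all_boot all_order all_algebra.
Set Implicit Arguments. Unset Strict Implicit. Unset Printing Implicit Defensive.
Import Order.TTheory GRing.Theory Num.Theory.
Local Open Scope ring_scope.

Definition harm (i n : nat) : rat := \sum_(1 <= j < n.+1) ((j%:R) ^+ i)^-1.

(* Main.v *)
Require Import Defs.
From mathcomp Require Import all_boot all_order all_algebra.
From mathcomp Require Import ring zify.
Import Order.TTheory GRing.Theory Num.Theory.
Local Open Scope ring_scope.

Section GL.
Variable R : fieldType.

Definition fac (a : R) (b : bool) : {poly R} := ('X - a%:P) ^+ (b.+1).
Definition res (P C : {poly R}) (a : R) (b : bool) : R :=
  if b then (P^`().[a] * C.[a] - P.[a] * C^`().[a]) / (C.[a] ^+ 2)
  else P.[a] / C.[a].

Lemma res_add (P1 P2 C : {poly R}) a (b : bool) : res (P1 + P2) C a b = res P1 C a b + res P2 C a b.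
Proof.
rewrite /res; case: b; rewrite ?derivD !hornerD -mulrDl; congr (_ * _); ring.
Qed.

Lemma res_fac0 (S C : {poly R}) a (b : bool) : res (fac a b * S) C a b = 0.
Proof.
rewrite /res /fac; case: b => /=.
  by rewrite derivM deriv_exp !hornerE /= !subrr !expr0n /= !(mulr0, mul0r, mulr0n, addr0, subrr).
by rewrite !hornerE subrr !(mulr0, mul0r).
Qed.

Lemma res_canc (F P C : {poly R}) a (b:bool) : F.[a] != 0 -> C.[a] != 0 ->
  res (F * P) (F * C) a b = res P C a b.
Proof.
move=> hF hC; rewrite /res; case: b; rewrite ?derivM ?hornerD !hornerM; field; by rewrite hF hC.
Qed.

Lemma res_one (A : {poly R}) a (b : bool) : (size A <= b.+1)%N -> res A 1 a b = A`_b.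
Proof.
rewrite /res; case: b => /= hA.
  have hd : (size A^`() <= 1)%N.
    have [->|A0] := eqVneq A 0; first by rewrite deriv0 size_poly0.
    by rewrite -ltnS (leq_trans (lt_size_deriv A0)).
  by rewrite (size1_polyC hd) derivC !hornerE coef_deriv /= mulr1n subr0 expr1n divr1.
by rewrite {1}(size1_polyC hA) !hornerE divr1.
Qed.

Lemma coef_top (p q : {poly R}) k g : q \is monic -> size q = g.+1 ->
  (size p <= k)%N -> (p * q)`_(k + g).-1 = p`_k.-1.
Proof.
move=> mq sq sp.
have [->|p0] := eqVneq p 0; first by rewrite mul0r !coef0.
case: (ltngtP (size p) k) sp => // [lt _|eq _].
  have h1 : (size p <= k.-1)%N by lia.
  have h2 : (size (p * q)%R <= (k + g).-1)%N by rewrite size_Mmonic // sq; lia.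
  by rewrite (nth_default _ h1) (nth_default _ h2).
have := lead_coef_Mmonic p mq; rewrite /lead_coef size_Mmonic // sq addnS /= eq => ->.
done.
Qed.

Variables (a : nat -> R) (e : nat -> bool).
Definition Qp N := \prod_(0 <= j < N) fac (a j) (e j).
Definition Dg N := (\sum_(0 <= j < N) (e j).+1)%N.

Lemma fac_monic j : fac (a j) (e j) \is monic.
Proof. by rewrite /fac monic_exp // monicXsubC. Qed.

Lemma Qp_monic N : Qp N \is monic.
Proof. by rewrite /Qp monic_prod // => j _; apply: fac_monic. Qed.

Lemma Qp_size N : size (Qp N) = (Dg N).+1.
Proof.
elim: N => [|N IH]; first by rewrite /Qp /Dg !big_geq // size_poly1.
rewrite /Qp /Dg !big_nat_recr //= -/(Qp N) size_Mmonic ?fac_monic ?monic_neq0 ?Qp_monic //.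
by rewrite IH /fac size_exp_XsubC -/(Dg N) addSn addnS.
Qed.

Lemma fac_hornerN i j : a i != a j -> (fac (a j) (e j)).[a i] != 0.
Proof. by move=> h; rewrite /fac horner_exp !hornerE expf_neq0 // subr_eq0. Qed.

Theorem GL N : forall P : {poly R},
  (forall i j, (i < N)%N -> (j < N)%N -> a i = a j -> i = j) ->
  (size P <= Dg N)%N ->
  P`_(Dg N).-1 = \sum_(0 <= i < N)
     res P (\prod_(0 <= j < N | j != i) fac (a j) (e j)) (a i) (e i).
Proof.
elim: N => [|N IH] P inj sP.
  rewrite big_geq //; move: sP; rewrite /Dg big_geq // leqn0 size_poly_eq0 => /eqP ->.
  by rewrite coef0.
have injN : forall i j, (i < N)%N -> (j < N)%N -> a i = a j -> i = j.
  by move=> i j hi hj; apply: inj; apply: ltnW.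
have neq : forall i, (i < N)%N -> a N != a i.
  by move=> i hi; apply/eqP => /inj h; have := h (ltnSn N) (ltnW hi); move=> E; rewrite E ltnn in hi.
set G := Qp N; set F := fac (a N) (e N).
have GN : G.[a N] != 0.
  rewrite /G /Qp horner_prod prodf_seq_neq0; apply/allP => j; rewrite mem_index_iota => /andP [_ hj].
  by apply/implyP => _; apply: fac_hornerN; apply: neq.
have cop : coprimep G F by rewrite /F /fac coprimep_pexpr // coprimep_XsubC /root.
have [[u1 u2] /= hu] := Bezout_eq1_coprimepP _ _ cop.
set B := (P * u2) %% G.
set A := P * u1 + (P * u2) %/ G * F.
have PAB : P = A * G + B * F.
  have E := divp_eq (P * u2) G; rewrite /A /B.
  have -> : (P * u2) %% G = P * u2 - (P * u2) %/ G * G by rewrite {2}E addrAC subrr add0r.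
  transitivity (P * (u1 * G + u2 * F)); first by rewrite hu mulr1.
  by ring.
have G0 : G != 0 by rewrite monic_neq0 // Qp_monic.
have sB : (size B <= Dg N)%N by rewrite -ltnS -Qp_size ltn_modp.
clearbody A B.
have sF : size F = (e N).+2 by rewrite /F /fac size_exp_XsubC.
have DgS : Dg N.+1 = (Dg N + (e N).+1)%N by rewrite /Dg big_nat_recr.
have sA : (size A <= (e N).+1)%N.
  have [->|A0] := eqVneq A 0; first by rewrite size_poly0.
  have h : A * G = P - B * F by rewrite [in RHS]PAB addrK.
  have : (size (A * G)%R <= Dg N + (e N).+1)%N.
    rewrite h (leq_trans (size_polyD _ _)) // size_polyN geq_max -DgS sP /=.
    rewrite (leq_trans (size_polyMleq _ _)) // sF DgS addnS /=.
    by rewrite leq_add2r.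
  by rewrite size_Mmonic ?Qp_monic // Qp_size addnS /= addnC leq_add2l.
rewrite DgS {1}PAB coefD.
have c1 : (A * G)`_(Dg N + (e N).+1).-1 = A`_(e N).
  by rewrite addnC (coef_top _ _ _ _ (Qp_monic N) (Qp_size N) sA).
have c2 : (B * F)`_(Dg N + (e N).+1).-1 = B`_(Dg N).-1.
  by rewrite (coef_top _ _ _ _ (fac_monic N) sF sB).
rewrite c1 c2.
rewrite big_nat_recr //= addrC; congr (_ + _).
  have cofN : \prod_(0 <= j < N.+1 | j != N) fac (a j) (e j) = G.
    rewrite big_mkcond big_nat_recr //= eqxx mulr1 /G /Qp.
    by apply: eq_big_nat => j /andP [_ hj]; rewrite ifT // neq_ltn hj.
  rewrite cofN PAB res_add.
  have -> : res (A * G) G (a N) (e N) = res (G * A) (G * 1) (a N) (e N) by rewrite mulr1 mulrC.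
  rewrite res_canc ?hornerE ?oner_neq0 // res_one //.
  by rewrite mulrC /F res_fac0 addr0.
rewrite (IH B injN sB); apply: eq_big_nat => i /andP [_ hi].
have -> : \prod_(0 <= j < N.+1 | j != i) fac (a j) (e j)
   = F * \prod_(0 <= j < N | j != i) fac (a j) (e j).
  rewrite big_mkcond big_nat_recr //= (negbTE (_ : N != i)); first by rewrite mulrC -big_mkcond.
  by rewrite neq_ltn hi orbT.
have Ci : (\prod_(0 <= j < N | j != i) fac (a j) (e j)).[a i] != 0.
  rewrite horner_prod prodf_seq_neq0; apply/allP => j; rewrite mem_index_iota => /andP [_ hj].
  apply/implyP => ji; apply: fac_hornerN; apply/eqP => /injN E.
  by move: ji; rewrite E ?eqxx.
rewrite PAB res_add.
have -> : G = fac (a i) (e i) * \prod_(0 <= j < N | j != i) fac (a j) (e j).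
  by rewrite /G /Qp (bigD1_seq i) ?mem_index_iota ?iota_uniq.
rewrite mulrCA res_fac0 add0r [B * F]mulrC res_canc //.
by apply: fac_hornerN; rewrite eq_sym; apply: neq.
Qed.

End GL.
Arguments fac {R}.
Arguments res {R}.
Arguments GL {R}.

Lemma harm0 : harm 1 0 = 0.
Proof. by rewrite /harm big_geq. Qed.

Lemma harmS n : harm 1 n.+1 = harm 1 n + (n.+1%:R)^-1.
Proof. by rewrite /harm big_nat_recr //= expr1. Qed.

Lemma sum_plus k L : \sum_(1 <= i < L.+1) ((k%:R + i%:R)^-1 : rat) = harm 1 (k + L) - harm 1 k.
Proof.
elim: L => [|L IH]; first by rewrite big_geq // addn0 subrr.
by rewrite big_nat_recr //= IH addnS harmS -addnS natrD; ring.
Qed.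

Lemma sum_rev k : \sum_(0 <= j < k) ((k%:R - j%:R)^-1 : rat) = harm 1 k.
Proof.
elim: k => [|k IH]; first by rewrite big_geq // harm0.
rewrite big_ltn // big_add1 /= subr0 harmS -IH addrC; congr (_ + _).
apply: eq_big_nat => j _; congr (_^-1); rewrite -!natr1; ring.
Qed.

Lemma sum_neg k L : \sum_(k.+1 <= j < (k + L).+1) ((k%:R - j%:R)^-1 : rat) = - harm 1 L.
Proof.
elim: L => [|L IH]; first by rewrite big_geq ?addn0 // harm0 oppr0.
rewrite addnS big_nat_recr /=; last by rewrite ltnS leq_addr.
rewrite IH harmS opprD; congr (_ + _).
rewrite -invrN; congr (_^-1); rewrite -natr1 natrD -natr1; ring.
Qed.

Lemma prod_plus k L : \prod_(1 <= i < L.+1) (k%:R + i%:R : rat) * k`!%:R = (k + L)`!%:R.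
Proof.
elim: L => [|L IH]; first by rewrite big_geq // addn0 mul1r.
by rewrite big_nat_recr //= mulrAC IH addnS factS natrM -addnS natrD mulrC.
Qed.

Lemma prod_rev k : \prod_(0 <= j < k) (k%:R - j%:R : rat) = k`!%:R.
Proof.
elim: k => [|k IH]; first by rewrite big_geq.
rewrite big_ltn // big_add1 /= subr0 factS natrM -IH; congr (_ * _).
apply: eq_big_nat => j _; rewrite -!natr1; ring.
Qed.

Lemma prod_neg k L : \prod_(k.+1 <= j < (k + L).+1) (k%:R - j%:R : rat) = (-1) ^+ L * L`!%:R.
Proof.
elim: L => [|L IH]; first by rewrite big_geq ?addn0 // expr0 mulr1.
rewrite addnS big_nat_recr /=; last by rewrite ltnS leq_addr.
rewrite IH factS natrM exprS -natr1 natrD -natr1; ring.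
Qed.

Lemma logder (I : eqType) (r : seq I) (P : pred I) (f : I -> {poly rat}) x :
  {in r, forall i, P i -> (f i).[x] != 0} ->
  (\prod_(i <- r | P i) f i)^`().[x] =
    (\prod_(i <- r | P i) f i).[x] * \sum_(i <- r | P i) ((f i)^`().[x] / (f i).[x]).
Proof.
elim: r => [|i r IH] nz; first by rewrite !big_nil derivC hornerC mulr0.
have nz' : {in r, forall i, P i -> (f i).[x] != 0}.
  by move=> j jr; apply: nz; rewrite inE jr orbT.
rewrite !big_cons; case: ifP => Pi; last exact: IH.
rewrite derivM hornerD !hornerM (IH nz'); have := nz i (mem_head _ _) Pi => h; by field.
Qed.

Lemma split_ne (T : Type) (idx : T) (op : Monoid.com_law idx) (F : nat -> T) k N :
  (k < N)%N -> \big[op/idx]_(0 <= j < N | j != k) F j =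
    op (\big[op/idx]_(0 <= j < k) F j) (\big[op/idx]_(k.+1 <= j < N) F j).
Proof.
move=> kN; rewrite big_mkcond (@big_cat_nat _ _ _ k 0 N) // ?(ltnW kN) /=.
rewrite (big_ltn kN) eqxx Monoid.mul1m; congr (op _ _); apply: eq_big_nat => j /andP [h1 h2].
  by rewrite ifT // ltn_eqF.
  by rewrite ifT // gtn_eqF.
by [].
Qed.

Section Main.
Variables m n : nat.
Hypothesis hnm : (n <= m)%N.

Definition Pp : {poly rat} :=
  \prod_(i <- index_iota 1 m.+1 ++ index_iota 1 n.+1) ('X - (- i%:R)%:P).
Definition PP := 'X * Pp.
Definition ee j := (j <= n)%N.
Definition aa j : rat := j%:R.
Definition Cf k := \prod_(0 <= j < m.+1 | j != k) fac (aa j) (ee j).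

Lemma Pp_horner k : Pp.[k%:R] * k`!%:R * k`!%:R = ((k + m)`! * (k + n)`!)%:R.
Proof.
rewrite /Pp horner_prod big_cat /= natrM -!prod_plus.
under eq_bigr do rewrite hornerXsubC opprK.
under [X in _ * X * _ * _]eq_bigr do rewrite hornerXsubC opprK.
ring.
Qed.

Lemma Pp_nz k : Pp.[k%:R] != 0.
Proof.
apply/eqP => h; have := Pp_horner k; rewrite h !mul0r => /esym/eqP.
by rewrite pnatr_eq0 muln_eq0 !eqn0Ngt !fact_gt0.
Qed.

Lemma Pp_logder k : Pp^`().[k%:R] =
  Pp.[k%:R] * ((harm 1 (k + m) - harm 1 k) + (harm 1 (k + n) - harm 1 k)).
Proof.
rewrite /Pp logder; last first.
  move=> i; rewrite mem_cat !mem_index_iota => hi _; rewrite hornerXsubC opprK -natrD pnatr_eq0 addn_eq0; lia.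
congr (_ * _); rewrite big_cat /= -!sum_plus.
congr (_ + _); apply: eq_bigr => i _; by rewrite derivXsubC hornerXsubC hornerC opprK div1r.
Qed.

Lemma fac_ratio j k (b : bool) : k != j ->
  (fac (j%:R : rat) b)^`().[k%:R] / (fac (j%:R) b).[k%:R] = (b.+1)%:R / (k%:R - j%:R).
Proof.
move=> kj; have h : (k%:R - j%:R : rat) != 0 by rewrite subr_eq0 eqr_nat.
rewrite /fac deriv_exp derivXsubC mul1r hornerMn !horner_exp hornerXsubC /= exprS.
rewrite -mulr_natr; field; by rewrite h /= ?expf_neq0.
Qed.

Lemma Cf_nz k : (Cf k).[k%:R] != 0.
Proof.
rewrite /Cf horner_prod prodf_seq_neq0; apply/allP => j _; apply/implyP => jk.
by rewrite /fac horner_exp hornerXsubC expf_neq0 // subr_eq0 eqr_nat eq_sym.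
Qed.

Lemma Cf_logder k : (Cf k)^`().[k%:R] =
  (Cf k).[k%:R] * \sum_(0 <= j < m.+1 | j != k) ((ee j).+1%:R / (k%:R - j%:R)).
Proof.
rewrite /Cf logder; last first.
  by move=> j _ jk; rewrite /fac horner_exp hornerXsubC expf_neq0 // subr_eq0 eqr_nat eq_sym.
by congr (_ * _); apply: eq_bigr => j jk; rewrite fac_ratio // eq_sym.
Qed.

Lemma sum_neg' k N : (k <= N)%N ->
  \sum_(k.+1 <= j < N.+1) ((k%:R - j%:R)^-1 : rat) = - harm 1 (N - k).
Proof. by move=> h; rewrite -(sum_neg k) subnKC. Qed.

Lemma SW k : (k <= n)%N ->
  \sum_(0 <= j < m.+1 | j != k) ((ee j).+1%:R / (k%:R - j%:R) : rat) =
  2%:R * harm 1 k - 2%:R * harm 1 (n - k) - (harm 1 (m - k) - harm 1 (n - k)).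
Proof.
move=> kn; rewrite split_ne; last by lia.
have E : \sum_(k.+1 <= j < m.+1) ((k%:R - j%:R)^-1 : rat) =
   \sum_(k.+1 <= j < n.+1) ((k%:R - j%:R)^-1 : rat) + \sum_(n.+1 <= j < m.+1) ((k%:R - j%:R)^-1 : rat).
  by rewrite (@big_cat_nat _ _ _ n.+1) //; lia.
have km : (k <= m)%N by lia.
rewrite !sum_neg' // in E.
rewrite (@big_cat_nat _ _ _ n.+1 k.+1 m.+1) /=; [|lia|lia].
have -> : \sum_(n.+1 <= i < m.+1) ((ee i).+1%:R / (k%:R - i%:R) : rat) = - harm 1 (m - k) + harm 1 (n - k).
  rewrite E; transitivity (\sum_(n.+1 <= j < m.+1) ((k%:R - j%:R)^-1 : rat)); last by ring.
  apply: eq_big_nat => j /andP [h1 h2].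
  have -> : ee j = false by rewrite /ee; apply/negbTE; rewrite -ltnNge.
  by rewrite div1r.
have hA : \sum_(0 <= j < k) ((ee j).+1%:R / (k%:R - j%:R) : rat) = 2%:R * harm 1 k.
  rewrite -sum_rev big_distrr; apply: eq_big_nat => j /andP [h1 h2].
  have -> : ee j = true by apply/idP; rewrite /ee; lia.
  by [].
have hB : \sum_(k.+1 <= j < n.+1) ((ee j).+1%:R / (k%:R - j%:R) : rat) = 2%:R * (- harm 1 (n - k)).
  rewrite -(sum_neg' k n kn) big_distrr; apply: eq_big_nat => j /andP [h1 h2].
  have -> : ee j = true by apply/idP; rewrite /ee; lia.
  by [].
rewrite hA hB; ring.
Qed.

Lemma prod_neg' k N : (k <= N)%N ->
  \prod_(k.+1 <= j < N.+1) (k%:R - j%:R : rat) = (-1) ^+ (N - k) * (N - k)`!%:R.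
Proof. by move=> h; rewrite -(prod_neg k) subnKC. Qed.

Lemma prod_rev_shift a k : (a <= k)%N ->
  \prod_(a <= j < k) (k%:R - j%:R : rat) = (k - a)`!%:R.
Proof.
move=> ak; rewrite -{1}(add0n a) big_addn -prod_rev; apply: eq_big_nat => i /andP [_ hi].
rewrite natrD natrB //.
ring.
Qed.

Lemma fac_horner j k : (fac (aa j) (ee j)).[k%:R] = (k%:R - j%:R) ^+ (ee j).+1.
Proof. by rewrite /fac horner_exp hornerXsubC. Qed.

Lemma Cf_val1 k : (k <= n)%N ->
  (Cf k).[k%:R] = (-1) ^+ (m - n) * (k`!%:R) ^+ 2 * (n - k)`!%:R * (m - k)`!%:R.
Proof.
move=> kn; have km : (k <= m)%N by lia.
rewrite /Cf horner_prod split_ne /=; last by lia.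
rewrite (@big_cat_nat _ _ _ n.+1 k.+1 m.+1) /=; [|lia|lia].
have h1 : \prod_(0 <= j < k) (fac (aa j) (ee j)).[k%:R] = (k`!%:R) ^+ 2.
  rewrite -prod_rev -prodrXl; apply: eq_big_nat => j /andP [_ hj].
  rewrite fac_horner; have -> : ee j = true by apply/idP; rewrite /ee; lia.
  by [].
have h2 : \prod_(k.+1 <= j < n.+1) (fac (aa j) (ee j)).[k%:R] =
    (\prod_(k.+1 <= j < n.+1) (k%:R - j%:R : rat)) ^+ 2.
  rewrite -prodrXl; apply: eq_big_nat => j /andP [_ hj].
  rewrite fac_horner; have -> : ee j = true by apply/idP; rewrite /ee; lia.
  by [].
have h3 : \prod_(n.+1 <= j < m.+1) (fac (aa j) (ee j)).[k%:R] =
    \prod_(n.+1 <= j < m.+1) (k%:R - j%:R : rat).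
  apply: eq_big_nat => j /andP [hj _].
  rewrite fac_horner; have -> : ee j = false by apply/negbTE; rewrite /ee; lia.
  by rewrite expr1.
have E : \prod_(k.+1 <= j < m.+1) (k%:R - j%:R : rat) =
   \prod_(k.+1 <= j < n.+1) (k%:R - j%:R : rat) * \prod_(n.+1 <= j < m.+1) (k%:R - j%:R : rat).
  by rewrite (@big_cat_nat _ _ _ n.+1) //; lia.
rewrite !prod_neg' // in E.
rewrite h1 h2 h3 prod_neg' //.
set Z := \prod_(n.+1 <= j < m.+1) _ in E *.
transitivity ((k`!%:R) ^+ 2 * ((-1) ^+ (n - k) * (n - k)`!%:R) *
   ((-1) ^+ (n - k) * (n - k)`!%:R * Z) : rat); first by ring.
rewrite -E.
have sg : ((-1) ^+ (m - k) : rat) = (-1) ^+ (m - n) * (-1) ^+ (n - k).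
  by rewrite -exprD; congr (_ ^+ _); lia.
rewrite sg.
have ss : ((-1) ^+ (n - k) * (-1) ^+ (n - k) : rat) = 1 by rewrite -expr2 sqrr_sign.
transitivity ((-1) ^+ (m - n) * ((-1) ^+ (n - k) * (-1) ^+ (n - k)) * (k`!%:R) ^+ 2 * (n - k)`!%:R * (m - k)`!%:R : rat).
  ring.
by rewrite ss mulr1.
Qed.

Lemma Cf_val2 k : (n < k)%N -> (k <= m)%N ->
  (Cf k).[k%:R] * (k - n.+1)`!%:R = (-1) ^+ (m - k) * (k`!%:R) ^+ 2 * (m - k)`!%:R.
Proof.
move=> nk km.
rewrite /Cf horner_prod split_ne /=; last by lia.
rewrite (@big_cat_nat _ _ _ n.+1 0 k) /=; [|lia|lia].
have h1 : \prod_(0 <= j < n.+1) (fac (aa j) (ee j)).[k%:R] =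
    (\prod_(0 <= j < n.+1) (k%:R - j%:R : rat)) ^+ 2.
  rewrite -prodrXl; apply: eq_big_nat => j /andP [_ hj].
  rewrite fac_horner; have -> : ee j = true by apply/idP; rewrite /ee; lia.
  by [].
have h2 : \prod_(n.+1 <= j < k) (fac (aa j) (ee j)).[k%:R] =
    \prod_(n.+1 <= j < k) (k%:R - j%:R : rat).
  apply: eq_big_nat => j /andP [hj _].
  rewrite fac_horner; have -> : ee j = false by apply/negbTE; rewrite /ee; lia.
  by rewrite expr1.
have h3 : \prod_(k.+1 <= j < m.+1) (fac (aa j) (ee j)).[k%:R] =
    \prod_(k.+1 <= j < m.+1) (k%:R - j%:R : rat).
  apply: eq_big_nat => j /andP [hj _].
  rewrite fac_horner; have -> : ee j = false by apply/negbTE; rewrite /ee; lia.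
  by rewrite expr1.
have E : \prod_(0 <= j < k) (k%:R - j%:R : rat) =
   \prod_(0 <= j < n.+1) (k%:R - j%:R : rat) * \prod_(n.+1 <= j < k) (k%:R - j%:R : rat).
  by rewrite (@big_cat_nat _ _ _ n.+1) //; lia.
rewrite prod_rev prod_rev_shift in E; last by lia.
rewrite h1 h2 h3 prod_neg' // prod_rev_shift; last by lia.
rewrite E; ring.
Qed.

Lemma NB k M : (k <= M)%N ->
  ('C(M + k, k) * 'C(M, k) * (k`! * k`! * (M - k)`!))%N = (k + M)`!.
Proof.
move=> kM; apply/eqP; rewrite -(eqn_pmul2r (fact_gt0 M)); apply/eqP.
have h3 := bin_fact (leq_addl M k); rewrite addnK in h3.
have h4 := bin_fact kM.
transitivity (('C(M + k, k) * (k`! * M`!)) * ('C(M, k) * (k`! * (M - k)`!)))%N; first by ring.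
by rewrite h3 h4 addnC.
Qed.

Lemma fact_nz k : (k`!%:R : rat) != 0.
Proof. by rewrite pnatr_eq0 -lt0n fact_gt0. Qed.

Lemma T1 k : (k <= n)%N ->
  res PP (Cf k) k%:R (ee k) =
  (-1) ^+ (m - n) * (('C(m + k, k) * 'C(m, k) * 'C(n + k, k) * 'C(n, k))%:R
     * (1 + k%:R * (harm 1 (m + k) + harm 1 (m - k) + harm 1 (n + k)
                    + harm 1 (n - k) - 4%:R * harm 1 k))).
Proof.
move=> kn; have km : (k <= m)%N by lia.
have -> : ee k = true by apply/idP.
set t : rat := (-1) ^+ (m - n).
have tt : t * t = 1 by rewrite -expr2 sqrr_sign.
set B4 : rat := ('C(m + k, k) * 'C(m, k) * 'C(n + k, k) * 'C(n, k))%:R.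
have hV : Pp.[k%:R] = t * B4 * (Cf k).[k%:R].
  have hP := Pp_horner k.
  have hPV : Pp.[k%:R] = ((k + m)`! * (k + n)`!)%:R / (k`!%:R * k`!%:R).
    by rewrite -hP; field; rewrite fact_nz.
  rewrite hPV Cf_val1 // natrM -(NB k m km) -(NB k n kn) /B4 !natrM.
  rewrite [RHS](_ : _ = (t * t) * ('C(m + k, k)%:R * 'C(m, k)%:R * 'C(n + k, k)%:R * 'C(n, k)%:R *
       (k`!%:R ^+ 2 * (n - k)`!%:R * (m - k)`!%:R))); last by rewrite /t; ring.
  rewrite tt mul1r; field; by rewrite fact_nz.
rewrite /res /PP derivM derivX mul1r hornerD !hornerM hornerX Pp_logder Cf_logder SW //.
rewrite hV (addnC k m) (addnC k n).
have W0 := Cf_nz k.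
by field.
Qed.

Lemma T2 k : (n < k)%N -> (k <= m)%N ->
  res PP (Cf k) k%:R (ee k) =
  (-1) ^+ (m - n) * ((-1) ^+ (k - n) * ('C(m + k, k) * 'C(m, k) * 'C(n + k, k))%:R
     / ('C(k.-1, n))%:R).
Proof.
move=> nk km.
have -> : ee k = false by apply/negbTE; rewrite /ee -ltnNge.
set s' : rat := (-1) ^+ (m - k).
set u : rat := (-1) ^+ (k - n).
have uu : u * u = 1 by rewrite -expr2 sqrr_sign.
have ss : s' * s' = 1 by rewrite -expr2 sqrr_sign.
have sg : ((-1) ^+ (m - n) : rat) = s' * u.
  by rewrite -exprD; congr (_ ^+ _); lia.
rewrite sg [RHS](_ : _ = s' * (u * u) * (('C(m + k, k) * 'C(m, k) * 'C(n + k, k))%:R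
     / ('C(k.-1, n))%:R)); last by ring.
rewrite uu mulr1.
have F0 : ((k - n.+1)`!%:R : rat) != 0 by apply: fact_nz.
have K0 : ((-1) ^+ (m - k) * (k`!%:R) ^+ 2 * (m - k)`!%:R : rat) != 0.
  by rewrite !mulf_neq0 ?expf_neq0 ?fact_nz ?signr_eq0.
have W0 := Cf_nz k.
have hW : (Cf k).[k%:R] = s' * ((k`!%:R) ^+ 2 * (m - k)`!%:R) / (k - n.+1)`!%:R.
  by rewrite -[LHS](mulfK F0) Cf_val2 // /s'; ring.
have hWi : (Cf k).[k%:R]^-1 = s' * (k - n.+1)`!%:R / ((k`!%:R) ^+ 2 * (m - k)`!%:R).
  apply: (mulfI W0); rewrite mulfV // [X in _ = X * _]hW.
  transitivity (s' * s'); first by rewrite ss.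
  field; by rewrite ?F0 ?mulf_neq0 ?expf_neq0 ?fact_nz.
have hP := Pp_horner k.
have hPV : Pp.[k%:R] = ((k + m)`! * (k + n)`!)%:R / (k`!%:R * k`!%:R).
  by rewrite -hP; field; rewrite fact_nz.
have hC12 : ('C(m + k, k) * 'C(m, k))%:R = ((k + m)`!%:R / (k`!%:R * k`!%:R * (m - k)`!%:R) : rat).
  rewrite -(NB k m km) natrM [in RHS]natrM [in RHS]natrM; field; by rewrite !fact_nz.
have hC3 : ('C(n + k, k))%:R = ((k + n)`!%:R / (k`!%:R * n`!%:R) : rat).
  have h := bin_fact (leq_addl n k); rewrite addnK in h.
  rewrite (addnC k n) -h natrM natrM; field; by rewrite !fact_nz.
have hC5 : ('C(k.-1, n))%:R = ((k.-1)`!%:R / (n`!%:R * (k - n.+1)`!%:R) : rat).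
  have nk1 : (n <= k.-1)%N by lia.
  have h := bin_fact nk1.
  have -> : (k - n.+1 = k.-1 - n)%N by lia.
  rewrite -h natrM natrM; field; by rewrite !fact_nz.
have hk : (k`!%:R : rat) = k%:R * (k.-1)`!%:R.
  have e : k = k.-1.+1 by lia.
  by rewrite {1 2}e factS natrM.
rewrite /res /PP hornerM hornerX hWi hPV [(_ * 'C(n + k, k))%:R]natrM hC12 hC3 hC5 hk.
have k0 : (k%:R : rat) != 0 by rewrite pnatr_eq0; lia.
have f1 : ((k.-1)`!%:R : rat) != 0 by apply: fact_nz.
field; by rewrite k0 f1 !fact_nz.
Qed.

End Main.

Lemma Dg_val m n : (n <= m)%N -> Dg (ee n) m.+1 = (m + n).+2.
Proof.
move=> hnm; have h : (n.+1 <= m.+1)%N by lia.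
rewrite /Dg (@big_cat_nat _ _ _ n.+1) //=.
rewrite (eq_big_nat _ _ (F2 := fun _ => 2%N)); last first.
  by move=> j /andP [_ hj]; rewrite /ee; have -> : (j <= n)%N by lia.
rewrite [X in (_ + X)%N](eq_big_nat _ _ (F2 := fun _ => 1%N)); last first.
  by move=> j /andP [hj _]; rewrite /ee; have -> : (j <= n)%N = false by apply/negbTE; lia.
rewrite !sum_nat_const_nat; lia.
Qed.

Lemma PP_size m n : size (PP m n) = (m + n).+2.
Proof.
rewrite /PP mulrC size_Mmonic ?monicX //; last first.
  by rewrite monic_neq0 // /Pp monic_prod // => i _; apply: monicXsubC.
by rewrite /Pp size_prod_XsubC size_cat !size_iota size_polyX !subSS !subn0 addn2.
Qed.

Lemma PP_monic m n : PP m n \is monic.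
Proof. by rewrite /PP monicMl ?monicX // /Pp monic_prod // => i _; apply: monicXsubC. Qed.

Theorem theorem1p2 (m n : nat) (hn : (0 < n)%N) (hnm : (n <= m)%N) :
  \sum_(0 <= k < n.+1)
     ('C(m + k, k) * 'C(m, k) * 'C(n + k, k) * 'C(n, k))%:R
     * (1 + k%:R * (harm 1 (m + k) + harm 1 (m - k) + harm 1 (n + k)
                    + harm 1 (n - k) - 4%:R * harm 1 k))
  + \sum_(n.+1 <= k < m.+1)
     (-1) ^+ (k - n) * ('C(m + k, k) * 'C(m, k) * 'C(n + k, k))%:R
     / ('C(k.-1, n))%:R
  = (-1) ^+ (m + n) :> rat.
Proof.
have inj : forall i j, (i < m.+1)%N -> (j < m.+1)%N -> aa i = aa j -> i = j.
  by move=> i j _ _ /eqP; rewrite /aa eqr_nat => /eqP.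
have hs : (size (PP m n) <= Dg (ee n) m.+1)%N by rewrite PP_size Dg_val.
have key := GL aa (ee n) m.+1 (PP m n) inj hs.
have lc : (PP m n)`_(Dg (ee n) m.+1).-1 = 1.
  by rewrite Dg_val // -PP_size; have := PP_monic m n; rewrite monicE /lead_coef => /eqP.
rewrite lc (@big_cat_nat _ _ _ n.+1) /= in key; [|lia|lia].
rewrite (eq_big_nat _ _ (F2 := fun k => (-1) ^+ (m - n) * (('C(m + k, k) * 'C(m, k) * 'C(n + k, k) * 'C(n, k))%:R
     * (1 + k%:R * (harm 1 (m + k) + harm 1 (m - k) + harm 1 (n + k)
                    + harm 1 (n - k) - 4%:R * harm 1 k))))) in key; last first.
  move=> k /andP [_ hk]; apply: (T1 m n hnm k); lia.
rewrite [X in _ = _ + X](eq_big_nat _ _ (F2 := fun k => (-1) ^+ (m - n) * ((-1) ^+ (k - n) * ('C(m + k, k) * 'C(m, k) * 'C(n + k, k))%:R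
     / ('C(k.-1, n))%:R))) in key; last first.
  move=> k /andP [h1 h2]; apply: (T2 m n hnm k); lia.
rewrite -!big_distrr /= -mulrDr in key.
have sg : ((-1) ^+ (m + n) : rat) = (-1) ^+ (m - n).
  have -> : (m + n = (m - n) + n * 2)%N by lia.
  by rewrite exprD exprM sqrr_sign mulr1.
rewrite sg; apply: (mulfI (_ : (-1) ^+ (m - n) != 0 :> rat)); first by rewrite signr_eq0.
by rewrite -key -expr2 sqrr_sign.
Qed.
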